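(* Let $n\ge 3$, let the sites of an $n$-qubit chain be partitioned into nonempty consecutive intervals $L=\{1,\dots,a\}$, $C=\{a+1,\dots,a+k\}$, $R=\{a+k+1,\dots,n\}$, and let $W\in\mathrm{Sp}(2n,\mathbb{Z}_2)$ be the symplectic matrix of a Clifford unitary $U$ on the chain. Then $W$ satisfies the left wall condition around $C$ if and only if it satisfies the right wall condition around $C$. (All walls in Clifford circuits are two-sided.)
   Context: Pauli operators modulo phases are identified with $\mathbb{Z}_2^{2n}$ via $(p_1,q_1,\dots,p_n,q_n)\mapsto X^{p_1}Z^{q_1}\otimes\cdots\otimes X^{p_n}Z^{q_n}$; the symplectic form is $J=\bigoplus_{i=1}^n\begin{pmatrix}0&1\\1&0\end{pmatrix}$ (two Paulis commute iff $b^TJb'=0$), $\mathrm{Sp}(2n,\mathbb{Z}_2)=\{S:SJS^T=J\}$, and a Clifford unitary $U$ induces $W$ with $UP_bU^\dagger\propto P_{Wb}$. For a set of sites $S$, $V_S$ is the subspace of vectors supported on $S$, so $\mathbb{Z}_2^{2n}=V_L\oplus V_C\oplus V_R$, vectors written $(l,c,r)$. Left wall condition: for all integers $t\ge1$ and all $l\in V_L$, $W^t(l,0,0)\in V_L\oplus V_C\oplus\{0\}$. Right wall condition: for all integers $t\ge 1$ and all $r\in V_R$, $W^t(0,0,r)\in\{0\}\oplus V_C\oplus V_R$. *)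

(* Defs.v *)
From HB Require Import structures.
From mathcomp Require Import all_boot all_order all_algebra.
Set Implicit Arguments. Unset Strict Implicit. Unset Printing Implicit Defensive.
Import GRing.Theory.
Local Open Scope ring_scope.

(* Coordinates of Z_2^{2n}, 0-indexed: coordinate 2i is p_{i+1}, 2i+1 is q_{i+1}.
   Coordinate j belongs to site j./2 (0-indexed site). *)

Definition symJ (n : nat) : 'M['F_2]_(2 * n) :=
  \matrix_(i, j) (if (i./2 == j./2)%N && (i != j :> nat) then 1 else 0).

Definition symplectic (n : nat) (S : 'M['F_2]_(2 * n)) : Prop :=
  S *m symJ n *m S^T = symJ n.

Definition act_pow (n : nat) (W : 'M['F_2]_(2 * n)) (t : nat) (b : 'cV['F_2]_(2 * n)) :=
  iter t (fun x => W *m x) b.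

(* Sites: L = {0..a-1}, C = {a..a+k-1}, R = {a+k..n-1} (0-indexed).
   Coordinate j lies on L iff j./2 < a, on R iff a+k <= j./2. *)
Definition left_wall (n a k : nat) (W : 'M['F_2]_(2 * n)) : Prop :=
  forall t : nat, (1 <= t)%N -> forall l : 'cV['F_2]_(2 * n),
    (forall j : 'I_(2 * n), (a <= j./2)%N -> l j 0 = 0) ->
    forall j : 'I_(2 * n), (a + k <= j./2)%N -> act_pow W t l j 0 = 0.

Definition right_wall (n a k : nat) (W : 'M['F_2]_(2 * n)) : Prop :=
  forall t : nat, (1 <= t)%N -> forall r : 'cV['F_2]_(2 * n),
    (forall j : 'I_(2 * n), (j./2 < a + k)%N -> r j 0 = 0) ->
    forall j : 'I_(2 * n), (j./2 < a)%N -> act_pow W t r j 0 = 0.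
Arguments left_wall : clear implicits.
Arguments right_wall : clear implicits.

(* Main.v *)
Require Import Defs.
From mathcomp Require Import all_boot all_order all_algebra.
From mathcomp Require Import zify.
Import GRing.Theory.
Local Open Scope ring_scope.

Definition pn (i : nat) : nat := if (i %% 2 == 0)%N then i.+1 else i.-1.

Lemma pn_lt n (i : 'I_(2 * n)) : (pn i < 2 * n)%N.
Proof. have := ltn_ord i; rewrite /pn; case: eqP => /eqP h /=; lia. Qed.

Definition pord n (i : 'I_(2 * n)) : 'I_(2 * n) := Ordinal (@pn_lt n i).
Arguments pord {n} i.

Lemma pnK i : pn (pn i) = i.
Proof.
rewrite /pn; case h: (i %% 2 == 0)%N.
  by have -> : (i.+1 %% 2 == 0)%N = false by move/eqP: h; lia.
have -> : (i.-1 %% 2 == 0)%N = true by move/negbT: h; lia.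
move/negbT: h; lia.
Qed.

Lemma pordK n : involutive (@pord n).
Proof. by move=> i; apply: val_inj => /=; rewrite pnK. Qed.

Lemma pord_half n (i : 'I_(2 * n)) : (pord i)./2 = i./2.
Proof. rewrite /= -!divn2 /pn; case: eqP => /eqP h; lia. Qed.

Lemma pn_spec (i j : nat) : ((i./2 == j./2) && (i != j))%N = (j == pn i).
Proof.
rewrite -!divn2 /pn; case h: (i %% 2 == 0)%N; move/eqP: h => h || move/negbT: h => h.
  apply/idP/idP; [case/andP => /eqP h1 h2; apply/eqP | move/eqP => ->; apply/andP; split]; lia.
apply/idP/idP; [case/andP => /eqP h1 h2; apply/eqP | move/eqP => ->; apply/andP; split]; lia.
Qed.

Lemma symJE n (i j : 'I_(2 * n)) : symJ n i j = (j == pord i)%:R.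
Proof.
rewrite /symJ mxE.
suff -> : ((i./2 == j./2)%N && (i != j :> nat)) = (j == pord i) by case: (j == pord i).
by rewrite pn_spec.
Qed.

Lemma mulJmxE n m (A : 'M['F_2]_(2 * n, m)) i j : (symJ n *m A) i j = A (pord i) j.
Proof.
rewrite mxE (bigD1 (pord i)) //= big1 ?addr0 => [|l /negbTE hl]; rewrite symJE.
  by rewrite eqxx mul1r.
by rewrite hl mul0r.
Qed.

Lemma mulmxJE n m (A : 'M['F_2]_(m, 2 * n)) i j : (A *m symJ n) i j = A i (pord j).
Proof.
rewrite mxE (bigD1 (pord j)) //= big1 ?addr0 => [|l hl]; rewrite symJE.
  by rewrite pordK eqxx mulr1.
have -> : (j == pord l) = false.
  by apply/negbTE; apply: contra hl => /eqP ->; rewrite pordK.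
by rewrite mulr0.
Qed.

Lemma JJ n : symJ n *m symJ n = 1%:M.
Proof.
apply/matrixP => i j; rewrite mulJmxE symJE pordK !mxE eq_sym; by [].
Qed.

Lemma act_powE n (W : 'M['F_2]_(2 * n)) t b : act_pow W t b = W ^+ t *m b.
Proof.
elim: t => [|t IH] /=; first by rewrite expr0 mul1mx.
by rewrite /act_pow /= -/(act_pow W t b) IH mulmxA exprS mulmxE.
Qed.

Lemma sympow n (W : 'M['F_2]_(2 * n)) m : symplectic W ->
  W ^+ m *m symJ n *m (W ^+ m)^T = symJ n.
Proof.
move=> hW; elim: m => [|m IH]; first by rewrite expr0 trmx1 mul1mx mulmx1.
by rewrite exprS -mulmxE trmx_mul -!mulmxA (mulmxA (symJ n)) (mulmxA (W ^+ m)) (mulmxA (W ^+ m) (symJ n)) IH mulmxA hW.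
Qed.

Lemma Wunit n (W : 'M['F_2]_(2 * n)) : symplectic W -> W \in unitmx.
Proof.
move=> hW; have [] // := @mulmx1_unit _ _ W (symJ n *m W^T *m symJ n).
by rewrite !mulmxA hW JJ.
Qed.

Arguments Wunit {n W}.
Arguments sympow {n W}.

Lemma cancelW n (W : 'M['F_2]_(2 * n)) d i : W \in unitmx ->
  W ^+ i = W ^+ (i + d) -> W ^+ d = 1.
Proof.
move=> hu; elim: i => [|i IH]; first by rewrite add0n expr0.
rewrite addSn !exprS -!mulmxE => h; apply: IH.
by rewrite -(mulKmx hu (W ^+ i)) h mulKmx.
Qed.

Lemma finorder n (W : 'M['F_2]_(2 * n)) : symplectic W ->
  exists2 N, (1 <= N)%N & W ^+ N = 1.
Proof.
move=> hW; pose f (i : 'I_(#|{: 'M['F_2]_(2 * n)}|.+1)) := W ^+ i.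
have : ~~ injectiveb f.
  apply/negP => /injectiveP /leq_card; rewrite card_ord; by rewrite ltnn.
case/injectivePn => x [y hxy hf].
wlog lt : x y hxy hf / (x < y)%N.
  move=> Hw; case: (ltngtP x y) => h; first exact: (Hw x y).
    by apply: (Hw y x) => //; rewrite eq_sym.
  by move: hxy; rewrite -(inj_eq val_inj) /= h eqxx.
exists (y - x)%N; first by rewrite subn_gt0.
apply: (@cancelW _ _ _ x (Wunit hW)); rewrite subnKC ?(ltnW lt) //.
Qed.

Lemma keyE n (W : 'M['F_2]_(2 * n)) t s : symplectic W -> W ^+ (t + s) = 1 ->
  forall i j, (W ^+ t) j i = (W ^+ s) (pord i) (pord j).
Proof.
move=> hW h1 i j.
have e1 : W ^+ s *m symJ n = symJ n *m (W ^+ t)^T.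
  have := sympow s hW => e; rewrite -[in RHS]e -!mulmxA -trmx_mul mulmxE -exprD h1.
  by rewrite trmx1 -mulmxE mulmx1.
have e2 : symJ n *m W ^+ s *m symJ n = (W ^+ t)^T.
  by rewrite -mulmxA e1 mulmxA JJ mul1mx.
have := congr1 (fun M : 'M_(2 * n) => M i j) e2 => /=.
by rewrite mulmxJE mulJmxE mxE => ->.
Qed.

Lemma delta_cond n (i : 'I_(2 * n)) (P : nat -> bool) :
  ~~ P (i./2) -> forall m : 'I_(2 * n), P (m./2) -> (delta_mx i 0 : 'cV['F_2]_(2 * n)) m 0 = 0.
Proof.
move=> hi m hm; rewrite mxE; case: eqP => // e; by move: hi; rewrite -e hm.
Qed.

Lemma leftE n a k W : left_wall n a k W -> forall t, (1 <= t)%N ->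
  forall i j : 'I_(2 * n), (i./2 < a)%N -> (a + k <= j./2)%N -> (W ^+ t) j i = 0.
Proof.
move=> H t ht i j hi hj.
have hd := @delta_cond n i (fun x => a <= x)%N; rewrite /= -ltnNge in hd.
by have := H t ht (delta_mx i 0) (hd hi) j hj; rewrite act_powE -colE mxE.
Qed.

Lemma rightE n a k W : right_wall n a k W -> forall t, (1 <= t)%N ->
  forall i j : 'I_(2 * n), (j./2 < a)%N -> (a + k <= i./2)%N -> (W ^+ t) j i = 0.
Proof.
move=> H t ht i j hj hi.
have hd := @delta_cond n i (fun x => x < a + k)%N; rewrite /= -leqNgt in hd.
by have := H t ht (delta_mx i 0) (hd hi) j hj; rewrite act_powE -colE mxE.
Qed.

Lemma left_intro n a k (W : 'M['F_2]_(2 * n)) : (forall t, (1 <= t)%N ->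
  forall i j : 'I_(2 * n), (i./2 < a)%N -> (a + k <= j./2)%N -> (W ^+ t) j i = 0) ->
  left_wall n a k W.
Proof.
move=> H t ht l hl j hj; rewrite act_powE mxE big1 // => m _.
case: (ltnP m./2 a) => hm; first by rewrite H // mul0r.
by rewrite hl // mulr0.
Qed.

Lemma right_intro n a k (W : 'M['F_2]_(2 * n)) : (forall t, (1 <= t)%N ->
  forall i j : 'I_(2 * n), (j./2 < a)%N -> (a + k <= i./2)%N -> (W ^+ t) j i = 0) ->
  right_wall n a k W.
Proof.
move=> H t ht r hr j hj; rewrite act_powE mxE big1 // => m _.
case: (ltnP m./2 (a + k)) => hm; first by rewrite hr // mulr0.
by rewrite H // mul0r.
Qed.

Lemma choose_s n (W : 'M['F_2]_(2 * n)) N : (1 <= N)%N -> W ^+ N = 1 ->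
  forall t, (1 <= t)%N -> exists2 s, (1 <= s)%N & W ^+ (t + s) = 1 /\ W ^+ (s + t) = 1.
Proof.
move=> hN hW t ht.
have hNt : (t <= N * t)%N by rewrite leq_pmull.
have e : (t + (2 * (N * t) - t) = N * (2 * t))%N by rewrite mulnCA; lia.
exists (2 * (N * t) - t)%N; first by lia.
have e' : W ^+ (t + (2 * (N * t) - t)) = 1 by rewrite e exprM hW expr1n.
by split; rewrite // addnC.
Qed.

Arguments finorder {n W}.
Arguments keyE {n W t s}.
Arguments choose_s {n W N}.
Arguments leftE {n a k W}.
Arguments rightE {n a k W}.

Theorem lemma3 (n a k : nat) (W : 'M['F_2]_(2 * n)) :
  (3 <= n)%N -> (1 <= a)%N -> (1 <= k)%N -> (a + k < n)%N ->
  symplectic W ->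
  (left_wall n a k W <-> right_wall n a k W).
Proof.
move=> _ _ _ _ hW; have [N hN hWN] := finorder hW.
split => H.
  apply: right_intro => t ht i j hj hi.
  have [s hs [e1 e2]] := choose_s hN hWN _ ht.
  rewrite (keyE hW e1) (leftE H _ hs) // pord_half //.
apply: left_intro => t ht i j hi hj.
have [s hs [e1 e2]] := choose_s hN hWN _ ht.
rewrite (keyE hW e1) (rightE H _ hs) // pord_half //.
Qed.
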